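(* Let $S$ be a set and let $P$ be a set of $S$-probabilities such that $0,1\in P$ and $1-p\in P$ for every $p\in P$. Then all elements of $P$ are varying if and only if $P$ is complemented, i.e. $p\wedge p'=0$ for all $p\in P$.
   Context: An $S$-probability is a function $p\colon S\to[0,1]$; sets of $S$-probabilities are ordered pointwise, $0,1$ are the constant functions and $p':=1-p$. For $p,q\in P$, $p\wedge q=0$ means that the only $x\in P$ with $x\le p$ and $x\le q$ is $x=0$. An $S$-probability $p$ is varying if whenever $p\le 1/2$ pointwise or $p\ge 1/2$ pointwise, then $p=0$ or $p=1$. *)

(* Defs.v *)
From Stdlib Require Import Reals.
Open Scope R_scope.

Definition is_Sprob {S : Type} (p : S -> R) : Prop :=
  forall s, 0 <= p s <= 1.

Definition ple {S : Type} (p q : S -> R) : Prop := forall s, p s <= q s.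

Definition pzero {S : Type} : S -> R := fun _ => 0.
Definition pone {S : Type} : S -> R := fun _ => 1.
Definition pcompl {S : Type} (p : S -> R) : S -> R := fun s => 1 - p s.

Definition meet_zero {S : Type} (P : (S -> R) -> Prop) (p q : S -> R) : Prop :=
  forall x, P x -> ple x p -> ple x q -> x = pzero.

Definition varying {S : Type} (p : S -> R) : Prop :=
  ((forall s, p s <= 1/2) \/ (forall s, 1/2 <= p s)) -> p = pzero \/ p = pone.

Definition complemented {S : Type} (P : (S -> R) -> Prop) : Prop :=
  forall p, P p -> meet_zero P p (pcompl p).

(* Main.v *)
Require Import Defs.
From Stdlib Require Import Reals Lra FunctionalExtensionality.
Open Scope R_scope.

Theorem mainTheorem2 (S : Type) (P : (S -> R) -> Prop)
  (HP : forall p, P p -> is_Sprob p)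
  (H0 : P pzero) (H1 : P pone)
  (Hc : forall p, P p -> P (pcompl p)) :
  (forall p, P p -> varying p) <-> complemented P.
Proof.
  split.
  - intros Hv p Pp x Px Hxp Hxq.
    unfold ple, pcompl in *.
    destruct (Hv x Px) as [Hx|Hx].
    + left. intros s. specialize (Hxp s). specialize (Hxq s). lra.
    + exact Hx.
    + subst x. apply functional_extensionality. intros s.
      specialize (Hxp s). specialize (Hxq s). unfold pone in *. lra.
  - intros Hcm p Pp [Hle|Hge].
    + left. apply (Hcm p Pp p Pp).
      * intros s; lra.
      * intros s; unfold pcompl; specialize (Hle s); lra.
    + right.
      assert (E : pcompl p = pzero).
      { apply (Hcm (pcompl p) (Hc p Pp) (pcompl p) (Hc p Pp)).
        - intros s; lra.
        - intros s; unfold pcompl; specialize (Hge s); lra. }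
      apply functional_extensionality. intros s.
      assert (E2 := equal_f E s). unfold pcompl, pzero, pone in *. lra.
Qed.
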